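(* Let $\alpha$ be a curve in $\mathbb{R}^3$ with nonzero curvature, let $\alpha_T$ be its tangent indicatrix, and let $\beta$ be a Bertrand-direction curve of $\alpha_T$ (an $X$-direction curve of $\alpha_T$ with $N_\beta=N_T$). Then $\alpha$ is a slant helix if and only if $\beta$ is a helix.
   Context: Let $\alpha:I\subset\mathbb{R}\to\mathbb{R}^3$ be a unit-speed curve with curvature $\kappa>0$, torsion $\tau$ and Frenet frame $\{T,N,B\}$. The tangent indicatrix of $\alpha$ is the curve $\alpha_T=T$ on the unit sphere. Its arc length is $s_T=\int\kappa\,ds$. Its Frenet apparatus is $\{T_T,N_T,B_T,\kappa_T,\tau_T\}$, with $\frac{dT_T}{ds_T}=\kappa_TN_T$, $\frac{dN_T}{ds_T}=-\kappa_TT_T+\tau_TB_T$ and $\frac{dB_T}{ds_T}=-\tau_TN_T$. Let $x,y,z$ be real functions of $s_T$ with $x^2+y^2+z^2=1$, and set $X=xT_T+yN_T+zB_T$. An integral curve $\beta$ of $X$, meaning $d\beta/ds_T=X$, is an $X$-direction curve of $\alpha_T$. It is regarded as a unit-speed Frenet curve with frame $\{T_\beta=X,N_\beta,B_\beta\}$, curvature $\kappa_\beta>0$ and torsion $\tau_\beta$. $\beta$ is a Bertrand-direction curve of $\alpha_T$ if $N_\beta=N_T$. A curve with curvature $k>0$ and torsion $t$ is a helix if its unit tangent makes a constant angle with a fixed line; equivalently, $t/k$ is constant. It is a slant helix if its principal normal makes a constant angle with a fixed line; equivalently, $\frac{k^2}{(k^2+t^2)^{3/2}}(t/k)'$ is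 constant, where $'$ is the derivative with respect to arc length. *)

(* Defs.v *)
From Stdlib Require Import Reals.
From Coquelicot Require Import Coquelicot.
Open Scope R_scope.

Definition V3 : Type := (R * R * R)%type.
Definition v1 (v : V3) : R := fst (fst v).
Definition v2 (v : V3) : R := snd (fst v).
Definition v3 (v : V3) : R := snd v.
Definition vadd (u v : V3) : V3 := (v1 u + v1 v, v2 u + v2 v, v3 u + v3 v).
Definition vscal (a : R) (v : V3) : V3 := (a * v1 v, a * v2 v, a * v3 v).
Definition dot (u v : V3) : R := v1 u * v1 v + v2 u * v2 v + v3 u * v3 v.
Definition cross (u v : V3) : V3 :=
  (v2 u * v3 v - v3 u * v2 v, v3 u * v1 v - v1 u * v3 v, v1 u * v2 v - v2 u * v1 v).

Definition vderiv (f : R -> V3) (t : R) (v : V3) : Prop :=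
  is_derive (fun s => v1 (f s)) t (v1 v) /\
  is_derive (fun s => v2 (f s)) t (v2 v) /\
  is_derive (fun s => v3 (f s)) t (v3 v).

Definition inI (a b : Rbar) (s : R) : Prop := Rbar_lt a s /\ Rbar_lt s b.

Definition image (phi : R -> R) (D : R -> Prop) (r : R) : Prop :=
  exists s, D s /\ phi s = r.

Definition frenet (D : R -> Prop) (c T N B : R -> V3) (k t : R -> R) : Prop :=
  forall s, D s ->
    vderiv c s (T s) /\
    vderiv T s (vscal (k s) (N s)) /\
    vderiv N s (vadd (vscal (- k s) (T s)) (vscal (t s) (B s))) /\
    vderiv B s (vscal (- t s) (N s)) /\
    dot (T s) (T s) = 1 /\ dot (N s) (N s) = 1 /\ dot (T s) (N s) = 0 /\
    B s = cross (T s) (N s) /\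
    0 < k s.

Definition is_helix (D : R -> Prop) (T : R -> V3) : Prop :=
  exists u : V3, dot u u = 1 /\ exists c : R, forall s, D s -> dot (T s) u = c.

Definition is_slant_helix (D : R -> Prop) (N : R -> V3) : Prop :=
  exists u : V3, dot u u = 1 /\ exists c : R, forall s, D s -> dot (N s) u = c.

(* Main.v *)
Require Import Defs.
From Stdlib Require Import Reals Lra Classical.
From Coquelicot Require Import Coquelicot.
Open Scope R_scope.

Lemma dotc F r F' u : vderiv F r F' -> is_derive (fun r => dot (F r) u) r (dot F' u).
Proof.
  intros [H1 [H2 H3]]. unfold dot.
  apply (is_derive_plus (fun r => v1 (F r) * v1 u + v2 (F r) * v2 u) (fun r => v3 (F r) * v3 u)).
  apply (is_derive_plus (fun r => v1 (F r) * v1 u) (fun r => v2 (F r) * v2 u)).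
  - exact (is_derive_scal_l (fun r => v1 (F r)) r (v1 F') (v1 u) H1).
  - exact (is_derive_scal_l (fun r => v2 (F r)) r (v2 F') (v2 u) H2).
  - exact (is_derive_scal_l (fun r => v3 (F r)) r (v3 F') (v3 u) H3).
Qed.

Lemma dotcomp F (phi : R -> R) s k M kap u :
  vderiv F (phi s) (vscal k M) -> is_derive phi s kap ->
  is_derive (fun s => dot (F (phi s)) u) s (kap * (k * dot M u)).
Proof.
  intros H Hp.
  replace (k * dot M u) with (dot (vscal k M) u) by (unfold dot, vscal, v1, v2, v3; simpl; ring).
  apply (is_derive_comp (fun r => dot (F r) u) phi). apply dotc; auto. auto.
Qed.

Lemma inI_loc a b s : inI a b s -> locally s (inI a b).
Proof.
  intros H. apply (open_and _ _ (open_Rbar_gt a) (open_Rbar_lt b)). exact H.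
Qed.

Lemma zero_of_const a b f c s l : (forall t, inI a b t -> f t = c) -> inI a b s ->
  is_derive f s l -> l = 0.
Proof.
  intros Hc Hs Hd.
  assert (Hd2 : is_derive f s 0).
  { apply (is_derive_ext_loc (fun _ => c)).
    - eapply filter_imp; [|apply (inI_loc a b s Hs)]. intros t Ht. simpl. now rewrite Hc.
    - exact (@is_derive_const R_AbsRing R_NormedModule c s). }
  apply is_derive_unique in Hd. apply is_derive_unique in Hd2. congruence.
Qed.

Lemma const_of_zero a b f : (forall t, inI a b t -> is_derive f t 0) ->
  forall s1 s2, inI a b s1 -> inI a b s2 -> f s1 = f s2.
Proof.
  intros Hd s1 s2 H1 H2.
  assert (Hin : forall x, Rmin s1 s2 <= x <= Rmax s1 s2 -> inI a b x).
  { intros x [Hx1 Hx2]. destruct H1 as [A1 B1], H2 as [A2 B2]. split.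
    - apply Rbar_lt_le_trans with (Rmin s1 s2); [|exact Hx1].
      unfold Rmin; destruct Rle_dec; auto.
    - apply Rbar_le_lt_trans with (Rmax s1 s2); [exact Hx2|].
      unfold Rmax; destruct Rle_dec; auto. }
  destruct (MVT_gen f s1 s2 (fun _ => 0)) as [c [_ Hc]].
  - intros x Hx. apply Hd, Hin; lra.
  - intros x Hx. apply continuity_pt_filterlim. apply (@ex_derive_continuous R_AbsRing R_NormedModule).
    eexists. apply Hd, Hin; lra.
  - lra.
Qed.

Lemma comp_chain (proj : V3 -> R) a b (T N TT alphaT : R -> V3) phi kappa s :
  is_derive (fun t => proj (T t)) s (kappa s * proj (N s)) ->
  is_derive (fun r => proj (alphaT r)) (phi s) (proj (TT (phi s))) ->
  is_derive phi s (kappa s) -> (forall t, inI a b t -> alphaT (phi t) = T t) ->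
  inI a b s -> 0 < kappa s -> proj (N s) = proj (TT (phi s)).
Proof.
  intros H1 H2 Hp He Hs Hk.
  assert (H3 : is_derive (fun t => proj (T t)) s (kappa s * proj (TT (phi s)))).
  { apply (is_derive_ext_loc (fun t => proj (alphaT (phi t)))).
    - eapply filter_imp; [|apply (inI_loc a b s Hs)]. intros t Ht. simpl. now rewrite He.
    - exact (is_derive_comp (fun r => proj (alphaT r)) phi s _ _ H2 Hp). }
  apply is_derive_unique in H1. apply is_derive_unique in H3.
  apply Rmult_eq_reg_l with (kappa s); [congruence|lra].
Qed.

Lemma v3eq (p q : V3) : v1 p = v1 q -> v2 p = v2 q -> v3 p = v3 q -> p = q.
Proof. destruct p as [[p1 p2] p3], q as [[q1 q2] q3]; unfold v1, v2, v3; simpl; intros; subst; auto. Qed.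

Lemma dot_scal k v u : dot (vscal k v) u = k * dot v u.
Proof. unfold dot, vscal, v1, v2, v3; simpl; ring. Qed.

Theorem theorem5p7 (a b : Rbar)
  (alpha T N B : R -> V3) (kappa tau : R -> R)
  (phi : R -> R)
  (alphaT TT NT BT : R -> V3) (kappaT tauT : R -> R)
  (x y z : R -> R)
  (beta Tb Nb Bb : R -> V3) (kappab taub : R -> R) :
  Rbar_lt a b ->
  frenet (inI a b) alpha T N B kappa tau ->
  (forall s, inI a b s -> is_derive phi s (kappa s)) ->
  (forall s, inI a b s -> alphaT (phi s) = T s) ->
  frenet (image phi (inI a b)) alphaT TT NT BT kappaT tauT ->
  (forall r, image phi (inI a b) r -> x r ^ 2 + y r ^ 2 + z r ^ 2 = 1) ->
  (forall r, image phi (inI a b) r ->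
     Tb r = vadd (vadd (vscal (x r) (TT r)) (vscal (y r) (NT r))) (vscal (z r) (BT r))) ->
  frenet (image phi (inI a b)) beta Tb Nb Bb kappab taub ->
  (forall r, image phi (inI a b) r -> Nb r = NT r) ->
  (is_slant_helix (inI a b) N <-> is_helix (image phi (inI a b)) Tb).
Proof.
  intros Hab Hf Hphi HaT HfT Hxyz HTb Hfb HNb.
  assert (Himg : forall s, inI a b s -> image phi (inI a b) (phi s)) by (intros s Hs; exists s; auto).
  assert (F1 : forall s, inI a b s -> N s = TT (phi s)).
  { intros s Hs. destruct (Hf s Hs) as [_ [[A1 [A2 A3]] [_ [_ [_ [_ [_ [_ Hk]]]]]]]].
    destruct (HfT (phi s) (Himg s Hs)) as [[C1 [C2 C3]] _].
    apply v3eq.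
    - exact (comp_chain v1 a b T N TT alphaT phi kappa s A1 C1 (Hphi s Hs) HaT Hs Hk).
    - exact (comp_chain v2 a b T N TT alphaT phi kappa s A2 C2 (Hphi s Hs) HaT Hs Hk).
    - exact (comp_chain v3 a b T N TT alphaT phi kappa s A3 C3 (Hphi s Hs) HaT Hs Hk). }
  assert (DTT : forall u s, inI a b s -> is_derive (fun s => dot (TT (phi s)) u) s
             (kappa s * (kappaT (phi s) * dot (NT (phi s)) u))).
  { intros u s Hs. destruct (HfT (phi s) (Himg s Hs)) as [_ [H _]].
    apply dotcomp; auto. }
  assert (DTb : forall u s, inI a b s -> is_derive (fun s => dot (Tb (phi s)) u) s
             (kappa s * (kappab (phi s) * dot (NT (phi s)) u))).
  { intros u s Hs. destruct (Hfb (phi s) (Himg s Hs)) as [_ [H _]].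
    rewrite <- (HNb (phi s) (Himg s Hs)). apply dotcomp; auto. }
  assert (Kp : forall s, inI a b s -> 0 < kappa s /\ 0 < kappaT (phi s) /\ 0 < kappab (phi s)).
  { intros s Hs. destruct (Hf s Hs) as [_ [_ [_ [_ [_ [_ [_ [_ K1]]]]]]]].
    destruct (HfT (phi s) (Himg s Hs)) as [_ [_ [_ [_ [_ [_ [_ [_ K2]]]]]]]].
    destruct (Hfb (phi s) (Himg s Hs)) as [_ [_ [_ [_ [_ [_ [_ [_ K3]]]]]]]].
    auto. }
  assert (Hconst : forall f : R -> R, (forall s, inI a b s -> is_derive f s 0) ->
     exists c, forall s, inI a b s -> f s = c).
  { intros f Hd. destruct (classic (exists s0, inI a b s0)) as [[s0 H0]|Hn].
    - exists (f s0). intros s Hs. eapply const_of_zero; eauto.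
    - exists 0. intros s Hs. exfalso. apply Hn. eauto. }
  split.
  - intros [u [Hu [c Hc]]]. exists u. split; auto.
    assert (Z : forall s, inI a b s -> dot (NT (phi s)) u = 0).
    { intros s Hs. destruct (Kp s Hs) as [K1 [K2 K3]].
      assert (E := zero_of_const a b (fun s => dot (TT (phi s)) u) c s _
                  (fun t Ht => eq_trans (f_equal (fun v => dot v u) (eq_sym (F1 t Ht))) (Hc t Ht))
                  Hs (DTT u s Hs)).
      apply Rmult_integral in E. destruct E as [E|E]; [lra|].
      apply Rmult_integral in E. destruct E as [E|E]; [lra|exact E]. }
    destruct (Hconst (fun s => dot (Tb (phi s)) u)) as [c' Hc'].
    { intros s Hs. replace 0 with (kappa s * (kappab (phi s) * dot (NT (phi s)) u)).
      apply DTb; auto. rewrite Z; auto; ring. }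
    exists c'. intros r [s [Hs <-]]. apply Hc'; auto.
  - intros [u [Hu [c Hc]]]. exists u. split; auto.
    assert (Z : forall s, inI a b s -> dot (NT (phi s)) u = 0).
    { intros s Hs. destruct (Kp s Hs) as [K1 [K2 K3]].
      assert (E := zero_of_const a b (fun s => dot (Tb (phi s)) u) c s _
                  (fun t Ht => Hc (phi t) (Himg t Ht)) Hs (DTb u s Hs)).
      apply Rmult_integral in E. destruct E as [E|E]; [lra|].
      apply Rmult_integral in E. destruct E as [E|E]; [lra|exact E]. }
    destruct (Hconst (fun s => dot (TT (phi s)) u)) as [c' Hc'].
    { intros s Hs. replace 0 with (kappa s * (kappaT (phi s) * dot (NT (phi s)) u)).
      apply DTT; auto. rewrite Z; auto; ring. }
    exists c'. intros s Hs. rewrite F1; auto.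
Qed.
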